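(* Let $X_n(d_1)\subset\mathbb{C}P^{n+1}$ be a nonsingular complex hypersurface of degree $d_1$ with $c_1=n+2-d_1<0$. Then $(-1)^n{\rm Td}(X_n(d_1))\geqslant n+1$.
   Context: The Todd genus of a compact complex $n$-manifold $M$ with formal Chern roots $x_1,\dots,x_n$ is ${\rm Td}(M)=\big(\prod_i\frac{x_i}{1-e^{-x_i}}\big)[M]$. *)

(* Defs.v *)
From mathcomp Require Import all_boot all_order all_algebra.
Set Implicit Arguments. Unset Strict Implicit. Unset Printing Implicit Defensive.
Import Order.TTheory GRing.Theory Num.Theory.
Local Open Scope ring_scope.

(* Coefficients of the power series (1 - e^{-x})/x = sum_k (-1)^k x^k/(k+1)! *)
Definition gcoef (k : nat) : rat := (-1) ^+ k / (k.+1)`!%:R.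

(* bseq m = [:: b_0; ...; b_m], the coefficients of the Todd series
   x/(1 - e^{-x}) = sum_k b_k x^k, computed as the inverse series of the above:
   b_0 = 1,  b_m = - sum_{j=1}^m gcoef j * b_{m-j}. *)
Fixpoint bseq (m : nat) : seq rat :=
  match m with
  | 0 => [:: 1]
  | m'.+1 => let s := bseq m' in
      rcons s (- \sum_(j < m'.+1) gcoef j.+1 * nth 0 s (m' - j))
  end.

Definition todd_coef (k : nat) : rat := nth 0 (bseq k) k.

(* Truncation (mod x^{N+1}) of Q(x) = x/(1-e^{-x}). *)
Definition todd_series (N : nat) : {poly rat} := \poly_(i < N.+1) todd_coef i.

(* Truncation (mod x^{N+1}) of 1/Q(d x) = (1 - e^{-dx})/(dx). *)
Definition inv_todd_series_scaled (N d : nat) : {poly rat} :=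
  \poly_(i < N.+1) (gcoef i * (d%:R) ^+ i).

(* With h the hyperplane class, T X (+) N = (n+2) O(1) - O (Euler sequence),
   N = O(d)|_X, so the formal Chern roots of TX are (stably) n+2 copies of h
   with one root d h removed; hence
     Td(X) = ( Q(h)^{n+2} / Q(d h) ) [X],  with  h^n [X] = d,
   i.e. d times the coefficient of h^n. *)
Definition todd_hypersurface (n d : nat) : rat :=
  d%:R * ((todd_series n) ^+ n.+2 * inv_todd_series_scaled n d)`_n.

(* Main.v *)
Require Import Defs.
From mathcomp Require Import all_boot all_order all_algebra zify ring lra.
Import Order.TTheory GRing.Theory Num.Theory.
Local Open Scope ring_scope.



Definition eqm (N : nat) (p q : {poly rat}) := forall i, (i < N)%N -> p`_i = q`_i.

Lemma eqm_refl N p : eqm N p p. Proof. by []. Qed.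
Lemma eqm_sym N p q : eqm N p q -> eqm N q p.
Proof. by move=> h i hi; rewrite h. Qed.
Lemma eqm_trans N p q r : eqm N p q -> eqm N q r -> eqm N p r.
Proof. by move=> h1 h2 i hi; rewrite h1 ?h2. Qed.
Lemma eqm_le N M p q : (M <= N)%N -> eqm N p q -> eqm M p q.
Proof. by move=> hMN h i hi; apply: h; apply: leq_trans hMN. Qed.
Lemma eqmD N p q r s : eqm N p q -> eqm N r s -> eqm N (p + r) (q + s).
Proof. by move=> h1 h2 i hi; rewrite !coefD h1 ?h2. Qed.
Lemma eqmN N p q : eqm N p q -> eqm N (- p) (- q).
Proof. by move=> h i hi; rewrite !coefN h. Qed.
Lemma eqmB N p q r s : eqm N p q -> eqm N r s -> eqm N (p - r) (q - s).
Proof. by move=> h1 h2; apply: eqmD => //; apply: eqmN. Qed.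
Lemma eqmMl N r p q : eqm N p q -> eqm N (r * p) (r * q).
Proof.
move=> h i hi; rewrite !coefM; apply: eq_bigr => j _; rewrite h //.
by apply: leq_ltn_trans hi; apply: leq_subr.
Qed.
Lemma eqmMr N r p q : eqm N p q -> eqm N (p * r) (q * r).
Proof. by move=> h; rewrite ![_ * r]mulrC; apply: eqmMl. Qed.
Lemma eqmM N p q r s : eqm N p q -> eqm N r s -> eqm N (p * r) (q * s).
Proof.
move=> h1 h2; apply: (@eqm_trans _ _ (q * r)); [exact: eqmMr | exact: eqmMl].
Qed.
Lemma eqmX N p q k : eqm N p q -> eqm N (p ^+ k) (q ^+ k).
Proof.
move=> h; elim: k => [|k IH]; first exact: eqm_refl.
by rewrite !exprS; apply: eqmM.
Qed.
Lemma eqm_deriv N p q : eqm N.+1 p q -> eqm N p^`() q^`().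
Proof. by move=> h i hi; rewrite !coef_deriv h. Qed.
Lemma eqm_sum N (I : finType) (F G : I -> {poly rat}) :
  (forall i, eqm N (F i) (G i)) -> eqm N (\sum_i F i) (\sum_i G i).
Proof.
move=> h k hk; rewrite !coef_sum; apply: eq_bigr => i _; exact: h.
Qed.

Lemma size_bseq m : size (Defs.bseq m) = m.+1.
Proof. by elim: m => [|m IH] //=; rewrite size_rcons IH. Qed.

Lemma nth_bseq m i : (i <= m)%N -> nth 0 (Defs.bseq m) i = todd_coef i.
Proof.
rewrite /todd_coef; elim: m => [|m IH]; first by rewrite leqn0 => /eqP ->.
rewrite leq_eqVlt => /orP [/eqP -> //|him].
by rewrite /= nth_rcons size_bseq him IH.
Qed.

Lemma todd_coef0 : todd_coef 0 = 1. Proof. by []. Qed.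
Lemma todd_coefS m : todd_coef m.+1 =
  - \sum_(j < m.+1) gcoef j.+1 * todd_coef (m - j).
Proof.
rewrite /todd_coef /= nth_rcons size_bseq ltnn eqxx.
congr (- _); apply: eq_bigr => j _; rewrite nth_bseq //; exact: leq_subr.
Qed.
Lemma gcoef0 : gcoef 0 = 1.
Proof. by rewrite /gcoef expr0 divr1. Qed.
Arguments eqm_sym {N p q}.
Arguments eqm_trans {N p q r}.
Arguments eqm_le {N M p q}.
Arguments eqmD {N p q r s}.
Arguments eqmN {N p q}.
Arguments eqmB {N p q r s}.
Arguments eqmMl {N} r {p q}.
Arguments eqmMr {N} r {p q}.
Arguments eqmM {N p q r s}.
Arguments eqmX {N p q} k.
Arguments eqm_deriv {N p q}.
Arguments eqm_sum {N I F G}.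



Definition Gp n : {poly rat} := \poly_(i < n.+2) gcoef i.

Lemma TG n : eqm n.+1 (todd_series n * Gp n) 1.
Proof.
move=> i hi; rewrite coefMr coefC.
have E : forall j : 'I_i.+1, (todd_series n)`_(i - j) * (Gp n)`_j
    = todd_coef (i - j) * gcoef j.
  move=> j; rewrite /todd_series /Gp !coef_poly.
  have -> : (i - j < n.+1)%N by have := ltn_ord j; lia.
  have -> : (j < n.+2)%N by have := ltn_ord j; lia.
  by [].
rewrite (eq_bigr _ (fun j _ => E j)).
case: i hi {E} => [|m] hm; first by rewrite big_ord1 todd_coef0 gcoef0 mulr1.
rewrite big_ord_recl /= subn0 gcoef0 mulr1 todd_coefS.
rewrite [X in - X + _](_ : _ = \sum_(j < m.+1) todd_coef (m.+1 - bump 0 j) * gcoef (bump 0 j)).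
  by rewrite addNr.
by apply: eq_bigr => j _; rewrite mulrC /bump /= add1n subSS.
Qed.

Lemma one_sub_f n : eqm n.+2 (1 - 'X * Gp n) (Gp n + 'X * (Gp n)^`()).
Proof.
move=> i hi; rewrite coefB coefD coefC !coefXM coef_deriv /Gp !coef_poly.
case: i hi => [|i] hi /=; first by rewrite gcoef0; ring.
rewrite hi (ltnW hi) /gcoef.
have h2 : (i`!%:R : rat) != 0 by rewrite pnatr_eq0 -lt0n fact_gt0.
rewrite !factS !natrM !exprS -mulr_natr.
field.
by rewrite h2 /= !paddr_eq0 ?ler0n ?oner_eq0 ?pnatr_eq0.
Qed.

Lemma Tder n (T G : {poly rat}) : eqm n.+1 (T * G) 1 ->
  eqm n T^`() (- (T^+2 * G^`())).
Proof.
move=> hTG.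
have h1 : eqm n (T * (T * G)^`()) 0.
  have := eqmMl T (eqm_deriv hTG); rewrite derivC mulr0; exact.
have h2 : eqm n (T^`() * (T * G)) T^`().
  have := eqmMl T^`() (eqm_le (leqnSn n) hTG); rewrite mulr1; exact.
apply: eqm_trans (eqm_sym h2) _.
have -> : T^`() * (T * G) = T * (T * G)^`() - T ^+ 2 * G^`().
  by rewrite derivM; ring.
rewrite -[X in eqm _ _ X]add0r; apply: eqmB => //; exact: eqm_refl.
Qed.

Arguments Tder {n T G}.

Lemma core n m (T G : {poly rat}) : eqm n.+1 (T * G) 1 -> (m <= n)%N ->
  (T ^+ m.+1 * (G + 'X * G^`()))`_m = (m == 0%N)%:R.
Proof.
move=> hTG hm.
have hTd := Tder hTG.
rewrite mulrDr coefD.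
have -> : (T ^+ m.+1 * G)`_m = (T ^+ m)`_m.
  rewrite exprSr -mulrA.
  have := eqmMl (T ^+ m) hTG; rewrite mulr1; apply; by [].
case: m hm => [|m] hm.
  by rewrite expr0 coefC /= mulrCA coefXM /= addr0.
rewrite mulrCA coefXM /=.
have hd := coef_deriv (T ^+ m.+1) m.
rewrite deriv_exp /= in hd.
have e : eqm n (T^`() * T ^+ m *+ m.+1) (- (T ^+ m.+2 * G^`()) *+ m.+1).
  move=> i hi; rewrite !coefMn; congr (_ *+ _).
  have := eqmMr (T ^+ m) hTd; move=> /(_ i hi) ->.
  have -> : - (T ^+ 2 * G^`()) * T ^+ m = - (T ^+ m.+2 * G^`()).
    by rewrite !exprS; ring.
  by [].
rewrite e // coefMn coefN in hd.
have hm1 : (m.+1%:R : rat) != 0 by rewrite pnatr_eq0.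
move: hd; rewrite -(mulr_natr (- _)) -(mulr_natr ((T ^+ m.+1)`_m.+1)).
move=> /(congr1 (fun x => x / m.+1%:R)).
rewrite !mulfK // => <-.
by rewrite addNr.
Qed.


Definition Ep (a : rat) N : {poly rat} := \poly_(i < N) (a ^+ i / i`!%:R).

Lemma fact_neq0 k : (k`!%:R : rat) != 0.
Proof. by rewrite pnatr_eq0 -lt0n fact_gt0. Qed.

Lemma EpD a b N : eqm N (Ep (a + b) N) (Ep a N * Ep b N).
Proof.
move=> i hi; rewrite coefM /Ep coef_poly hi addrC exprDn mulr_suml.
apply: eq_bigr => j _; rewrite !coef_poly.
have hj := ltn_ord j.
have -> : (j < N)%N by lia.
have -> : (i - j < N)%N by lia.
have hb := bin_fact (n:=i) (m:=j) (ltnSE hj).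
rewrite -(mulr_natr (b ^+ (i - j) * a ^+ j)).
have -> : ('C(i, j)%:R : rat) = i`!%:R / (j`!%:R * (i - j)`!%:R).
  rewrite -hb !natrM mulfK //.
  by rewrite mulf_neq0 // fact_neq0.
have := fact_neq0 j; have := fact_neq0 (i - j); have := fact_neq0 i.
move=> h1 h2 h3; field.
by rewrite h1 h2 h3.
Qed.

Lemma Ep0 N : eqm N (Ep 0 N) 1.
Proof.
move=> i hi; rewrite /Ep coef_poly hi coefC.
by case: i hi => [|i] hi; rewrite ?expr0 ?fact0 ?divr1 // expr0n mul0r.
Qed.

Lemma EpX d N : eqm N (Ep (- d%:R) N) (Ep (-1) N ^+ d).
Proof.
elim: d => [|d IH]; first by rewrite oppr0 expr0; exact: Ep0.
rewrite exprSr -[d.+1]addn1 natrD opprD.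
apply: eqm_trans (EpD _ _ _) _; exact: eqmMr.
Qed.


Lemma Ep_f n : eqm n.+2 (Ep (-1) n.+2) (1 - 'X * Gp n).
Proof.
move=> i hi; rewrite /Ep coefB coefC coefXM /Gp !coef_poly hi.
case: i hi => [|i] hi /=; first by rewrite expr0 fact0 divr1 subr0.
rewrite (ltnW hi) sub0r /gcoef factS natrM exprS.
have := fact_neq0 i => h; field.
by rewrite h /= paddr_eq0 ?ler0n ?oner_eq0.
Qed.

Lemma Ep_d n d : eqm n.+2 ('X * (inv_todd_series_scaled n d *+ d)) (1 - Ep (- d%:R) n.+2).
Proof.
move=> i hi; rewrite /Ep coefB coefC coefXM coefMn /inv_todd_series_scaled !coef_poly hi.
case: i hi => [|i] hi /=; first by rewrite expr0 fact0 divr1 subrr.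
have -> : (i < n.+1)%N by lia.
rewrite sub0r /gcoef factS natrM !exprS.
rewrite -(mulr_natr ((-1) ^+ i / _ * _) d).
have := fact_neq0 i => h.
move: (d%:R : rat) => t.
rewrite [(- t) ^+ i]exprNn.
move: ((-1) ^+ i : rat) (t ^+ i) => s u.
field.
by rewrite h /= paddr_eq0 ?ler0n ?oner_eq0.
Qed.

Lemma poly_ident (R : comNzRingType) (y : R) d : (0 < d)%N ->
  1 - (1 - y) ^+ d =
  (1 - y) * \sum_(k < d) ((1 - (-1) ^+ k *+ 'C(d.-1, k)) * y ^+ k) + y ^+ d.
Proof.
case: d => [//|d] _ /=.
have h1 := subrXX 1 y d.+1.
have h2 := exprBn 1 y d.
rewrite expr1n /= in h1.
have e1 : \sum_(k < d.+1) ((1 - (-1) ^+ k *+ 'C(d, k)) * y ^+ k)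
   = \sum_(k < d.+1) 1 ^+ (d - k) * y ^+ k - (1 - y) ^+ d.
  rewrite h2 -sumrB; apply: eq_bigr => k _; rewrite !expr1n; ring.
rewrite e1 mulrBr -h1 exprS; ring.
Qed.


Lemma polyC_c (k m : nat) :
  ((1 - (-1) ^+ k *+ 'C(m, k)) : {poly rat}) = (1 - (-1) ^+ k *+ 'C(m, k) : rat)%:P.
Proof. by rewrite polyCB polyCMn rmorphXn rmorphN1. Qed.

Lemma termV n (T G : {poly rat}) k : eqm n.+1 (T * G) 1 -> eqm n.+2 (1 - 'X * G) (G + 'X * G^`()) -> (0 < k)%N ->
  (T ^+ n.+2 * (1 - 'X * G) * 'X ^+ k * G ^+ k)`_n.+1 = (k == n.+1)%:R.
Proof.
move=> hTG hG hk.
rewrite mulrAC mulrC coefXnM.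
case: ltnP => hkn.
  by have -> : (k == n.+1) = false by apply/eqP; lia.
set m := (n.+1 - k)%N.
have hn : n.+2 = (m.+1 + k)%N by rewrite /m; lia.
have -> : T ^+ n.+2 * (1 - 'X * G) * G ^+ k = T ^+ m.+1 * (1 - 'X * G) * (T * G) ^+ k.
  by rewrite hn exprMn exprD; ring.
have e1 : eqm n.+1 (T ^+ m.+1 * (1 - 'X * G) * (T * G) ^+ k) (T ^+ m.+1 * (1 - 'X * G)).
  have := eqmMl (T ^+ m.+1 * (1 - 'X * G)) (eqmX k hTG).
  by rewrite expr1n mulr1 => h i hi; rewrite -h // mulrA.
rewrite e1; last by rewrite /m; lia.
have e2 := eqmMl (T ^+ m.+1) (eqm_le (leqnSn n.+1) hG).
rewrite e2; last by rewrite /m; lia.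
rewrite (@core n m T G hTG); last by rewrite /m; lia.
congr (_%:R); apply/eqP/eqP; rewrite /m; lia.
Qed.

Lemma todd_value n d : (n.+2 < d)%N ->
  todd_hypersurface n d = 1 - (-1) ^+ n.+1 *+ 'C(d.-1, n.+1).
Proof.
move=> hnd.
have hd : (0 < d)%N by lia.
have key : todd_hypersurface n d =
    ((todd_series n) ^+ n.+2 * ('X * (inv_todd_series_scaled n d *+ d)))`_n.+1.
  by rewrite /todd_hypersurface mulrCA coefXM /= mulrnAr coefMn mulr_natl.
rewrite key.
set T := todd_series n; set G := Gp n; set Gd := inv_todd_series_scaled n d.
have e : eqm n.+2 ('X * (Gd *+ d)) (1 - (1 - 'X * G) ^+ d).
  apply: eqm_trans (Ep_d n d) _; apply: eqmB; first exact: eqm_refl.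
  apply: eqm_trans (EpX d _) _; exact: eqmX (Ep_f n).
rewrite (eqmMl (T ^+ n.+2) e) // (@poly_ident _ ('X * G) d hd) mulrDr coefD.
rewrite [X in _ + X](_ : _ = 0); last first.
  rewrite exprMn mulrCA coefXnM; case: ltnP => // h; lia.
rewrite addr0 !mulr_sumr coef_sum.
have hTG : eqm n.+1 (T * G) 1 := TG n.
have hG : eqm n.+2 (1 - 'X * G) (G + 'X * G^`()) := one_sub_f n.
have ht : forall k : 'I_d, (T ^+ n.+2 * ((1 - 'X * G) * ((1 - (-1) ^+ k *+ 'C(d.-1, k)) * ('X * G) ^+ k)))`_n.+1
    = (1 - (-1) ^+ k *+ 'C(d.-1, k)) * (k == n.+1 :> nat)%:R.
  move=> k; rewrite polyC_c.
  set c := (1 - (-1) ^+ k *+ 'C(d.-1, k) : rat).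
  have -> : T ^+ n.+2 * ((1 - 'X * G) * (c%:P * ('X * G) ^+ k))
     = c%:P * (T ^+ n.+2 * (1 - 'X * G) * 'X ^+ k * G ^+ k).
    by rewrite exprMn; ring.
  rewrite coefCM; case: (posnP k) => hk.
    by rewrite /c hk bin0 expr0 subrr !mul0r.
  by rewrite termV.
rewrite (eq_bigr _ (fun k _ => ht k)).
have hn1 : (n.+1 < d)%N by lia.
rewrite (bigD1 (Ordinal hn1)) //= eqxx mulr1 big1 ?addr0 //.
move=> k hk; have -> : (k == n.+1 :> nat) = false.
  apply/negbTE; apply: contra hk => /eqP h.
  by apply/eqP; apply: val_inj.
by rewrite mulr0.
Qed.

Theorem lemma3p2 (n d : nat) (hc1 : (n.+2 < d)%N) :
  (n.+1)%:R <= (-1) ^+ n * todd_hypersurface n d :> rat.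
Proof.
rewrite todd_value //.
have hC : (n.+2 <= 'C(d.-1, n.+1))%N.
  have := leq_bin2l (n.+1) (_ : n.+2 <= d.-1)%N; rewrite binSn; apply; lia.
have hC' : ((n.+1 + 1)%:R <= ('C(d.-1, n.+1))%:R :> rat).
  by rewrite ler_nat addn1.
rewrite natrD in hC'.
rewrite exprS -mulr_natr.
set C := ('C(d.-1, n.+1))%:R : rat.
rewrite -signr_odd; case: (odd n); rewrite ?expr0 ?expr1; lra.
Qed.
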